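(* Consider the all-but-one private sequencing scheme described in the context, with $M\ge 2$ unknown individuals, $K$ known individuals, $S=M$ sequencers, constant coverage depth $\alpha\in\mathbb{N}$ and per-read error probability $\eta\in(0,1)$, $\eta\neq 1/2$. Let $\epsilon\in(0,1)$. If $$\frac{\alpha}{M+K-1}\;\ge\;\frac{8\eta(1-\eta)}{(1-2\eta)^2}\,\ln\!\left(\frac{2^M}{\epsilon}\right),$$ then the reconstruction condition holds: the data collector's estimate $\hat{\mathbf{x}}_n$ satisfies $\mathbb{P}(\hat{\mathbf{x}}_n\neq\mathbf{x}_n)\le\epsilon$ for every SNP position $n\in[N]$.
   Context: Setting. There are $M$ unknown individuals and $K$ known individuals, $N$ SNP positions, and $S=M$ non-colluding sequencers. The genome of unknown individual $m$ at SNP position $n$ is $X_{m,n}\in\{-1,1\}$ (major allele $=1$, minor $=-1$), and $\mathbf{x}_n=(X_{1,n},\dots,X_{M,n})^T$. The known individuals' alleles $y_{k,n}\in\{-1,1\}$ are known to the data collector. In the all-but-one scheme, sequencer $s$ receives (pooled, untagged) DNA fragments of all unknown individuals except individual $s$ and of all $K$ known individuals; each fragment contains exactly one SNP and is correctly mapped to its position; each individual $m\neq s$ and each known individual has exactly $\alpha$ fragments covering each SNP position at sequencer $s$ (constant coverage depth $\alpha$). Each sequencer reads every allele in every fragment independently with error probability $\eta$ (flipping $1\leftrightarrow-1$) and reports the reads to the data collector. Model of the data collector's observations used by the paper: after scaling the sum of reads at position $n$ from sequencer $s$ by $1/(\alpha(1-2\eta))$ and subtracting $\sum_k y_{k,n}$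 (with the Gaussian/central-limit approximation of the read noise), the data collector observes $$\mathbf{g}_n=\mathbf{H}\mathbf{x}_n+\mathbf{z}_n,\qquad \mathbf{H}=\mathbf{1}_{M\times M}-\mathbf{I}_{M\times M},$$ where $\mathbf{1}$ is the all-ones matrix, $\mathbf{z}_n\sim\mathcal{N}(0,\sigma^2\mathbf{I})$ is independent of $\mathbf{x}_n$, and $\sigma^2=\frac{4(M+K-1)}{\alpha}\frac{\eta(1-\eta)}{(1-2\eta)^2}$. The data collector estimates $\hat{\mathbf{x}}_n=\arg\min_{\mathbf{u}\in\{-1,1\}^M}\|\mathbf{g}_n-\mathbf{H}\mathbf{u}\|_2$. *)

(* Defs.v *)
From HB Require Import structures.
From mathcomp Require Import all_boot all_order all_algebra.
From mathcomp Require Import all_classical all_reals all_analysis.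
Set Implicit Arguments. Unset Strict Implicit. Unset Printing Implicit Defensive.
Import Order.TTheory GRing.Theory Num.Theory.
Local Open Scope classical_set_scope.
Local Open Scope ring_scope.

Definition allbutone_H (R : realType) (M : nat) : 'M[R]_M :=
  \matrix_(i, j) (if i == j then 0 else 1).

Definition pm1_vec (R : realType) (M : nat) (u : 'cV[R]_M) : Prop :=
  forall i, u i 0 = 1 \/ u i 0 = -1.

Definition sqnorm (R : realType) (M : nat) (v : 'cV[R]_M) : R :=
  \sum_i (v i 0) ^+ 2.

Definition noise_var (R : realType) (M K alpha : nat) (eta : R) : R :=
  4 * (M + K - 1)%:R / alpha%:R * (eta * (1 - eta) / (1 - 2 * eta) ^+ 2).

Definition mutually_independent d (T : measurableType d) (R : realType)
  (P : probability T R) (M : nat) (Z : 'I_M -> T -> R) : Prop :=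
  forall (J : {set 'I_M}) (B : 'I_M -> set R),
    (forall i, measurable (B i)) ->
    P (\bigcap_(i in [set` J]) (Z i @^-1` B i)) =
    (\prod_(i in J) P (Z i @^-1` B i))%E.

Definition observation d (T : measurableType d) (R : realType) (M : nat)
  (x : 'cV[R]_M) (Z : 'I_M -> T -> R) (w : T) : 'cV[R]_M :=
  allbutone_H R M *m x + \col_i Z i w.

(* Error event of the ML (minimum-distance) estimator over {-1,1}^M:
   some u <> x in {-1,1}^M is at least as close to g as H x is
   (i.e. the estimate may differ from x, whatever the tie-breaking). *)
Definition ml_error_event d (T : measurableType d) (R : realType) (M : nat)
  (x : 'cV[R]_M) (Z : 'I_M -> T -> R) : set T :=
  [set w | exists u : 'cV[R]_M, pm1_vec u /\ u <> x /\
     sqnorm (observation x Z w - allbutone_H R M *m u)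
       <= sqnorm (observation x Z w - allbutone_H R M *m x)].

(* Main.v *)
Require Import Defs.
From HB Require Import structures.
From mathcomp Require Import all_boot all_order all_algebra.
From mathcomp Require Import all_classical all_reals all_analysis.
From mathcomp Require Import ring lra zify measurable_realfun.
Import Order.TTheory GRing.Theory Num.Theory.
Local Open Scope classical_set_scope.
Local Open Scope ring_scope.
Lemma pt_bound (R : realType) (s m x : R) : s != 0 -> m ^+ 2 = 1 -> 1 <= m * x ->
  normal_pdf 0 s x <= expR (- 1 / (s ^+ 2 *+ 2)) * normal_pdf m s x.
Proof.
move=> s0 m2 mx; rewrite /normal_pdf (negbTE s0) /normal_fun.
rewrite mulrCA ler_pM2l ?normal_peak_gt0 // -expRD ler_expR.
have s2 : 0 < s ^+ 2 by rewrite lt_def sqrf_eq0 s0 sqr_ge0.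
have k0 : 0 < s ^+ 2 *+ 2 by rewrite mulr2n addr_gt0.
rewrite !mulNr -opprD -!mulrDl lerN2 ler_pM2r ?invr_gt0 //.
rewrite subr0; nra.
Qed.

Lemma half_tail (R : realType) (s m : R) : s != 0 -> m ^+ 2 = 1 ->
  (normal_prob 0 s [set r : R | (1 <= m * r)%R] <= (expR (- 1 / (s ^+ 2 *+ 2)))%:E)%E.
Proof.
move=> s0 m2.
have mA : measurable [set r : R | 1 <= m * r].
  have mf : measurable_fun setT (fun r : R => m * r) by apply: measurable_funM.
  have := mf measurableT _ (measurable_itv `[1, +oo[%R).
  rewrite setTI; congr measurable; apply/seteqP; split => r /=;
    by rewrite in_itv /= andbT.
rewrite /normal_prob.
apply: (@le_trans _ _ (\int[lebesgue_measure]_(x in [set r : R | (1 <= m * r)%R])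
   ((expR (- 1 / (s ^+ 2 *+ 2)))%:E * (normal_pdf m s x)%:E))%E).
  apply: ge0_le_integral => //.
  - by move=> x _; rewrite lee_fin normal_pdf_ge0.
  - apply/measurable_EFinP; apply: measurable_funTS; exact: measurable_normal_pdf.
  - apply: emeasurable_funM => //; apply/measurable_EFinP; apply: measurable_funTS; exact: measurable_normal_pdf.
  - by move=> x /= mx; rewrite -EFinM lee_fin pt_bound.
rewrite ge0_integralZl_EFin //.
- rewrite -[X in (_ <= X)%E]mule1 lee_pmul2l ?lte_fin ?expR_gt0 //.
  exact: (@probability_le1 _ _ _ (normal_prob m s)).
- by move=> x _; rewrite lee_fin normal_pdf_ge0.
- apply/measurable_EFinP; apply: measurable_funTS; exact: measurable_normal_pdf.
Qed.
Lemma entryE (R : realType) (M : nat) (x u z : 'cV[R]_M) i :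
  (allbutone_H R M *m x + z - allbutone_H R M *m u) i 0 =
  (\sum_j (if i == j then 0 else 1) * (x j 0 - u j 0)) + z i 0.
Proof.
rewrite !mxE addrAC; congr (_ + _).
by rewrite -sumrB; apply: eq_bigr => j _; rewrite /allbutone_H !mxE mulrBr.
Qed.

Lemma pm1_diff (R : realType) (a b : R) : (a = 1 \/ a = -1) -> (b = 1 \/ b = -1) ->
  (a - b) / 2 \is a Num.int.
Proof.
move=> [->|->] [->|->].
- have -> : ((1:R) - 1) / 2 = 0 by lra.
  by rewrite ?rpred0 ?rpred1.
- have -> : ((1:R) - -1) / 2 = 1 by lra.
  by rewrite ?rpred0 ?rpred1.
- have -> : ((-1:R) - 1) / 2 = -1 by lra.
  by rewrite rpredN rpred1.
- have -> : ((-1:R) - -1) / 2 = 0 by lra.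
  by rewrite ?rpred0 ?rpred1.
Qed.

Lemma key (R : realType) (M : nat) (x u z : 'cV[R]_M) :
  (2 <= M)%N -> pm1_vec x -> pm1_vec u -> u <> x ->
  sqnorm (allbutone_H R M *m x + z - allbutone_H R M *m u) <=
  sqnorm (allbutone_H R M *m x + z - allbutone_H R M *m x) ->
  exists i, 1 <= `|z i 0|.
Proof.
move=> M2 px pu ux hle.
apply: contrapT => hz.
have hz' : forall i, `|z i 0| < 1.
  by move=> i; rewrite ltNge; apply/negP => h; apply: hz; exists i.
pose d j := x j 0 - u j 0.
pose a i := \sum_j (if i == j then 0 else 1) * d j.
have aint : forall i, a i / 2 \is a Num.int.
  move=> i; rewrite /a mulr_suml; apply: rpred_sum => j _.
  rewrite -mulrA; apply: rpredM; first by case: (i == j); rewrite ?rpred0 ?rpred1.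
  exact: pm1_diff.
have aE : forall i, a i = (\sum_j d j) - d i.
  move=> i; rewrite /a (bigD1 i) //= eqxx mul0r add0r [in RHS](bigD1 i) //= addrAC subrr add0r.
  by apply: eq_bigr => j /negbTE; rewrite eq_sym => ->; rewrite mul1r.
have anz : exists i, a i != 0.
  apply: contrapT => ha.
  have ha' : forall i, d i = \sum_j d j.
    move=> i; apply/eqP; rewrite eq_sym -subr_eq0 -aE; apply/negPn/negP => h; by apply: ha; exists i.
  have S0 : \sum_j d j = 0.
    have : \sum_j d j = (\sum_j d j) *+ M.
      transitivity (\sum_(j : 'I_M) \sum_k d k); last by rewrite sumr_const card_ord.
      by apply: eq_bigr => j _; exact: ha'.
    move=> hS.
    have : (\sum_j d j) * (M%:R - 1) = 0 by rewrite mulrBr mulr1 mulr_natr -hS subrr.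
    move/eqP; rewrite mulf_eq0 => /orP [/eqP // |].
    rewrite subr_eq0 -[X in _ == X]/(1%:R) eqr_nat => /eqP hM.
    by rewrite hM in M2.
  apply: ux; apply/matrixP => i j; rewrite (ord1 j); apply/eqP.
  by rewrite eq_sym -subr_eq0 -/(d i) ha' S0.
have pos : forall i, a i != 0 -> 0 < (a i + z i 0) ^+ 2 - (z i 0) ^+ 2.
  move=> i ai.
  have h2 : 2 <= `|a i|.
    have H : a i / 2 != 0 by rewrite mulf_neq0 // invr_eq0 pnatr_eq0.
    have := norm_intr_ge1 (aint i) H.
    by rewrite normrM normfV normr_nat => h; lra.
  have hz1 := hz' i.
  have hAZ : - (`|a i| * `|z i 0|) <= a i * z i 0.
    by rewrite lerNl -normrM -normrN ler_norm.
  have hA2 : a i ^+ 2 = `|a i| ^+ 2 by rewrite real_normK // num_real.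
  have hp : 0 < `|a i| * (`|a i| - 2 * `|z i 0|).
    by apply: mulr_gt0; [rewrite normr_gt0 | lra].
  have -> : (a i + z i 0) ^+ 2 - z i 0 ^+ 2 = a i ^+ 2 + 2 * (a i * z i 0) by ring.
  rewrite hA2; nra.
have term : forall i, 0 <= (a i + z i 0) ^+ 2 - (z i 0) ^+ 2.
  move=> i; have [->|ai] := eqVneq (a i) 0; first by rewrite add0r subrr.
  exact: ltW (pos i ai).
have [i0 ai0] := anz.
move: hle; apply/negP; rewrite -ltNge.
have -> : allbutone_H R M *m x + z - allbutone_H R M *m x = z by rewrite addrAC subrr add0r.
rewrite -subr_gt0 /sqnorm -sumrB.
rewrite (bigD1 i0) //=; apply: ltr_pwDl.
  by rewrite entryE; exact: pos.
apply: sumr_ge0 => i _; rewrite entryE; exact: term.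
Qed.

Lemma arith (R : realType) (M K alpha : nat) (eta eps : R) :
  (2 <= M)%N -> 0 < eta < 1 -> eta != 1 / 2 -> 0 < eps < 1 ->
  alpha%:R / (M + K - 1)%:R >=
    8 * eta * (1 - eta) / (1 - 2 * eta) ^+ 2 * ln (2 ^+ M / eps) ->
  0 < noise_var M K alpha eta /\
  expR (- 1 / (noise_var M K alpha eta *+ 2)) <= eps / 2 ^+ M.
Proof.
move=> M2 /andP [e0 e1] eh /andP [p0 p1] hyp.
set L := ln (2 ^+ M / eps).
set A := (alpha%:R : R). set B := ((M + K - 1)%:R : R).
have h2M : 1 < 2 ^+ M :> R by rewrite exprn_egt1 // ?ltr1n // -lt0n (leq_trans _ M2).
have hL : 0 < L by rewrite ln_gt0 // ltr_pdivlMr // mul1r (lt_trans p1).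
have hq : 0 < eta * (1 - eta) by apply: mulr_gt0; lra.
have hr0 : 1 - 2 * eta != 0.
  apply: contraNneq eh => h; apply/eqP; lra.
have hr : 0 < (1 - 2 * eta) ^+ 2 by rewrite lt_def sqrf_eq0 hr0 sqr_ge0.
have hB : 0 < B by rewrite ltr0n subn_gt0 (leq_trans _ (leq_addr K M)).
have hR : 0 < 8 * eta * (1 - eta) / (1 - 2 * eta) ^+ 2 * L.
  by apply: mulr_gt0 => //; apply: divr_gt0 => //; apply: mulr_gt0; [apply: mulr_gt0|]; lra.
have hA : 0 < A.
  have : 0 < A / B by exact: (lt_le_trans hR hyp).
  by rewrite pmulr_lgt0 // invr_gt0.
set r := (1 - 2 * eta) ^+ 2 in hr hyp hR *.
set q := eta * (1 - eta) in hq.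
have h1 : 8 * q * L * B <= A * r.
  have E1 : 8 * eta * (1 - eta) / r * L * (B * r) = 8 * q * L * B.
    by rewrite /q; field; rewrite gt_eqF.
  have E2 : A / B * (B * r) = A * r by field; rewrite gt_eqF.
  by rewrite -E1 -E2 (ler_pM2r (mulr_gt0 hB hr)); exact: hyp.
have hv : noise_var M K alpha eta = 4 * B / A * (q / r) by [].
split; first by rewrite hv; apply: mulr_gt0; [apply: divr_gt0 => //; lra | exact: divr_gt0].
have -> : - 1 / (noise_var M K alpha eta *+ 2) = - (A * r / (8 * B * q)).
  rewrite hv; field; rewrite !gt_eqF //.
rewrite -[X in _ <= X]invf_div -(lnK (_ : 2 ^+ M / eps \in Num.pos)); last first.
  by rewrite posrE divr_gt0 // (lt_trans ltr01).
rewrite -expRN ler_expR lerN2 -/L ler_pdivlMr ?mulr_gt0 //; last by lra.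
by have -> : L * (8 * B * q) = 8 * q * L * B by ring.
Qed.

Lemma mhalf (R : realType) (m : R) : measurable [set r : R | 1 <= m * r].
Proof.
have mf : measurable_fun setT (fun r : R => m * r) by apply: measurable_funM.
have := mf measurableT _ (measurable_itv `[1, +oo[%R).
rewrite setTI; congr measurable; apply/seteqP; split => r /=;
  by rewrite in_itv /= andbT.
Qed.

Lemma two_mul_le_exp (M : nat) : (2 * M <= 2 ^ M)%N.
Proof.
elim: M => [|[|m] IH] //; rewrite expnS; have := IH; have := expn_gt0 2 m.+1; lia.
Qed.

Lemma mZsq d (T : measurableType d) (R : realType) (f : T -> R) (c : R) :
  measurable_fun setT f -> measurable_fun setT (fun w => (c + f w) ^+ 2).
Proof.
move=> mf; apply: measurable_funX; exact: measurable_funD.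
Qed.

Definition pv (R : realType) (M : nat) (b : {ffun 'I_M -> bool}) : 'cV[R]_M :=
  \col_i (if b i then 1 else -1).

Theorem theorem1 (R : realType) (M K N alpha : nat) (eta eps : R)
  (d : measure_display) (T : measurableType d) (P : probability T R)
  (x : 'I_N -> 'cV[R]_M) (Z : 'I_N -> 'I_M -> T -> R) :
  (2 <= M)%N ->
  0 < eta < 1 -> eta != 1 / 2 ->
  0 < eps < 1 ->
  (forall n, pm1_vec (x n)) ->
  (forall n i, measurable_fun setT (Z n i)) ->
  (forall n i (A : set R), measurable A ->
     P (Z n i @^-1` A) = normal_prob 0 (Num.sqrt (noise_var M K alpha eta)) A) ->
  (forall n, mutually_independent P (Z n)) ->
  alpha%:R / (M + K - 1)%:R >=
    8 * eta * (1 - eta) / (1 - 2 * eta) ^+ 2 * ln (2 ^+ M / eps) ->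
  forall n : 'I_N, (P (ml_error_event (x n) (Z n)) <= eps%:E)%E.
Proof.
move=> M2 heta eh heps px mZ hZ _ hyp n.
have [v0 hexp] := @arith R M K alpha eta eps M2 heta eh heps hyp.
move: hZ hexp v0; set v := noise_var M K alpha eta => hZ hexp v0.
set s := Num.sqrt v in hZ.
have s2 : s ^+ 2 = v by rewrite sqr_sqrtr // ltW.
have s0 : s != 0 by rewrite sqrtr_eq0 -ltNge v0.
set e := expR (- 1 / (v *+ 2)) in hexp.
set A := [set r : R | 1 <= `|r|].
have AE : A = [set r | 1 <= 1 * r] `|` [set r | 1 <= -1 * r].
  apply/seteqP; split => r /=; rewrite mul1r mulN1r.
    by rewrite /A /= ler_normr => /orP [h|h]; [left|right].
  by rewrite /A /= ler_normr => -[->|->] //; rewrite orbT.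
have mA : measurable A by rewrite AE; apply: measurableU; exact: mhalf.
have tail : forall i, (P (Z n i @^-1` A) <= (e + e)%:E)%E.
  move=> i; rewrite hZ // AE measureU //=; [| exact: mhalf | exact: mhalf |].
    rewrite EFinD; apply: leeD; rewrite /e -s2; apply: half_tail => //; lra.
  apply/seteqP; split => r //= [h1 h2]; lra.
set E := ml_error_event (x n) (Z n).
pose F k := [set w | exists i : 'I_M, val i = k /\ 1 <= `|Z n i w|].
have FE : forall i : 'I_M, F i = Z n i @^-1` A.
  move=> i; apply/seteqP; split => w /=.
    by move=> [j [/val_inj -> h]].
  by move=> h; exists i.
have mF : forall k, `I_M k -> measurable (F k).
  move=> k /= hk; have := FE (Ordinal hk); rewrite /= => ->.
  by have := mZ n (Ordinal hk) measurableT A mA; rewrite setTI.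
have msq : forall u, measurable_fun setT
    (fun w => sqnorm (observation (x n) (Z n) w - allbutone_H R M *m u)).
  move=> u; rewrite /sqnorm; apply: measurable_sum => i.
  under eq_fun do rewrite /observation entryE mxE.
  exact: mZsq.
have neq : (-1 : R) != 1 by apply/eqP => h; lra.
have mE : measurable E.
  pose S (b : {ffun 'I_M -> bool}) := [set w | pv R M b <> x n /\
    sqnorm (observation (x n) (Z n) w - allbutone_H R M *m pv R M b) <=
    sqnorm (observation (x n) (Z n) w - allbutone_H R M *m x n)].
  have -> : E = \bigcup_(b in [set: {ffun 'I_M -> bool}]) S b.
    apply/seteqP; split => w /=.
      move=> [u [pu [ux hle]]]; exists [ffun i => u i 0 == 1] => //.
      rewrite /S /=.
      have -> : pv R M [ffun i => u i 0 == 1] = u.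
        apply/matrixP => i j; rewrite (ord1 j) !mxE ffunE.
        by case: (pu i) => ->; rewrite ?eqxx // (negbTE neq).
      by split.
    move=> [b _ [hb hle]]; exists (pv R M b); split; last by split.
    by move=> i; rewrite mxE; case: (b i); [left|right].
  apply: fin_bigcup_measurable; first exact: finite_finset.
  move=> b _; have [hb|hb] := eqVneq (pv R M b) (x n).
    have -> : S b = set0 by apply/seteqP; split => w // [].
    exact: measurable0.
  have := measurable_fun_ler (msq (pv R M b)) (msq (x n)) measurableT (Y := [set true]) I.
  rewrite setTI; congr measurable; apply/seteqP; split => w /=.
    by move=> h; split => //; apply/eqP.
  by move=> [_ ->].
have sub : E `<=` \big[setU/set0]_(k < M) F k.
  move=> w [u [pu [ux hle]]].
  have [i hi] := @key R M (x n) u (\col_i Z n i w) M2 (px n) pu ux hle.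
  apply: (@bigsetU_sup _ (val i) M F (ltn_ord i)).
  by exists i; split => //; rewrite mxE in hi.
apply: (le_trans (@content_subadditive _ _ _ P E F M mF mE sub)).
apply: (@le_trans _ _ (\sum_(k < M) (e + e)%:E)%E).
  by apply: lee_sum => k _; rewrite FE; exact: tail.
rewrite sumEFin lee_fin sumr_const card_ord.
have hM : ((2 * M)%:R : R) <= 2 ^+ M by rewrite -natrX ler_nat two_mul_le_exp.
have e0 : 0 <= e by exact: expR_ge0.
have -> : (e + e) *+ M = e * (2 * M)%:R by rewrite -mulr_natr natrM; ring.
have hT : 0 < 2 ^+ M :> R by exact: exprn_gt0.
apply: (le_trans (ler_wpM2l e0 hM)).
by rewrite -ler_pdivlMr.
Qed.
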